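(* Let $\mathcal{C}$ be a Cartesian closed category equipped with a comonad $\Box$ that has a left adjoint $\mathsf{lock} \dashv \Box$; then equivalent terms $t$ and $u$ of type $A$ in context $\Gamma$ of the calculus $\mathrm{IS4}_C$ denote equal morphisms in $\mathcal{C}$.
   Context: $\mathrm{IS4}_C$ is the Fitch-style calculus with types $A ::= \iota \mid A \to B \mid \Box A$ and contexts $\Gamma ::= \cdot \mid \Gamma, A \mid \Gamma, \mathsf{lock}$ ($\mathsf{lock}$ the lock operator). The relation $\Delta \mathrel{R} \Gamma$ holds when $\Gamma$ extends $\Delta$ on the right by any number of types and locks (it is reflexive and transitive). Terms are those of STLC plus $\mathsf{box}\, t : \Box A$ in $\Gamma$ from $t : A$ in $\Gamma, \mathsf{lock}$, and $\mathsf{unbox}(t, e) : A$ in $\Gamma$ from $t : \Box A$ in $\Delta$ and an explicit proof $e : \Delta \mathrel{R} \Gamma$. The equational theory contains $\beta$/$\eta$ for functions, $\mathsf{unbox}(\mathsf{box}\, t, e) \equiv t[(\mathrm{id}, e)]$ (substituting the lock using $e$), and $t \equiv \mathsf{box}(\mathsf{unbox}(t, e_1))$ where $e_1 : \Gamma \mathrel{R} \Gamma, \mathsf{lock}$ adds one lock. Terms are interpreted in $\mathcal{C}$ by interpreting $\Box$ and $\mathsf{lock}$ as the right and left adjoint and $\mathsf{box}$/$\mathsf{unbox}$ via the adjuncts (Clouston's categorical semantics). *)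

(* Defs.v *)
Set Implicit Arguments.
Unset Strict Implicit.

Record Category := {
  ob :> Type;
  hom : ob -> ob -> Type;
  idm : forall a, hom a a;
  comp : forall a b c, hom b c -> hom a b -> hom a c;
  comp_id_l : forall a b (f : hom a b), comp (idm b) f = f;
  comp_id_r : forall a b (f : hom a b), comp f (idm a) = f;
  comp_assoc : forall a b c d (h : hom c d) (g : hom b c) (f : hom a b),
      comp h (comp g f) = comp (comp h g) f }.

Arguments idm {_} _.
Arguments comp {_ _ _ _} _ _.

Record CartesianClosed (C : Category) := {
  term : ob C;
  bang : forall a : ob C, @hom C a term;
  bang_unique : forall a (f : @hom C a term), f = bang a;
  prod : ob C -> ob C -> ob C;
  p1 : forall a b, @hom C (prod a b) a;
  p2 : forall a b, @hom C (prod a b) b;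
  pair : forall c a b, @hom C c a -> @hom C c b -> @hom C c (prod a b);
  pair_p1 : forall c a b (f : @hom C c a) (g : @hom C c b), comp (p1 a b) (pair f g) = f;
  pair_p2 : forall c a b (f : @hom C c a) (g : @hom C c b), comp (p2 a b) (pair f g) = g;
  pair_unique : forall c a b (h : @hom C c (prod a b)),
      pair (comp (p1 a b) h) (comp (p2 a b) h) = h;
  exp : ob C -> ob C -> ob C;   (* exp a b = b^a *)
  ev : forall a b, @hom C (prod (exp a b) a) b;
  cur : forall c a b, @hom C (prod c a) b -> @hom C c (exp a b);
  cur_beta : forall c a b (f : @hom C (prod c a) b),
      comp (ev a b) (pair (comp (cur f) (p1 c a)) (p2 c a)) = f;
  cur_unique : forall c a b (f : @hom C (prod c a) b) (g : @hom C c (exp a b)),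
      comp (ev a b) (pair (comp g (p1 c a)) (p2 c a)) = f -> g = cur f }.

Arguments term {_} _.
Arguments bang {_} _ _.
Arguments prod {_} _ _ _.
Arguments p1 {_} _ {_ _}.
Arguments p2 {_} _ {_ _}.
Arguments pair {_} _ {_ _ _} _ _.
Arguments exp {_} _ _ _.
Arguments ev {_} _ {_ _}.
Arguments cur {_} _ {_ _ _} _.

Record Functor (C : Category) := {
  fobj :> ob C -> ob C;
  fmap : forall a b, @hom C a b -> @hom C (fobj a) (fobj b);
  fmap_id : forall a, fmap (idm a) = idm (fobj a);
  fmap_comp : forall a b c (g : @hom C b c) (f : @hom C a b),
      fmap (comp g f) = comp (fmap g) (fmap f) }.

Arguments fmap {_} _ {_ _} _.

Record Comonad (C : Category) (F : Functor C) := {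
  cm_counit : forall a, @hom C (F a) a;
  cm_comult : forall a, @hom C (F a) (F (F a));
  cm_counit_nat : forall a b (f : @hom C a b),
      comp f (cm_counit a) = comp (cm_counit b) (fmap F f);
  cm_comult_nat : forall a b (f : @hom C a b),
      comp (fmap F (fmap F f)) (cm_comult a) = comp (cm_comult b) (fmap F f);
  cm_law1 : forall a, comp (cm_counit (F a)) (cm_comult a) = idm (F a);
  cm_law2 : forall a, comp (fmap F (cm_counit a)) (cm_comult a) = idm (F a);
  cm_law3 : forall a, comp (cm_comult (F a)) (cm_comult a)
                      = comp (fmap F (cm_comult a)) (cm_comult a) }.

Arguments cm_counit {_ _} _ _.
Arguments cm_comult {_ _} _ _.

Record Adjunction (C : Category) (L R : Functor C) := {
  adj_unit : forall a, @hom C a (R (L a));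
  adj_counit : forall a, @hom C (L (R a)) a;
  adj_unit_nat : forall a b (f : @hom C a b),
      comp (fmap R (fmap L f)) (adj_unit a) = comp (adj_unit b) f;
  adj_counit_nat : forall a b (f : @hom C a b),
      comp f (adj_counit a) = comp (adj_counit b) (fmap L (fmap R f));
  adj_tri_L : forall a, comp (adj_counit (L a)) (fmap L (adj_unit a)) = idm (L a);
  adj_tri_R : forall a, comp (fmap R (adj_counit a)) (adj_unit (R a)) = idm (R a) }.

Arguments adj_unit {_ _ _} _ _.
Arguments adj_counit {_ _ _} _ _.

Record ModalCCC := {
  mc_cat :> Category;
  mc_ccc : CartesianClosed mc_cat;
  mc_box : Functor mc_cat;
  mc_comonad : Comonad mc_box;
  mc_lock : Functor mc_cat;
  mc_adj : Adjunction mc_lock mc_box }.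

Inductive Ty : Type :=
| iota : Ty
| arr : Ty -> Ty -> Ty
| bx : Ty -> Ty.

Inductive Ctx : Type :=
| cnil : Ctx
| cext : Ctx -> Ty -> Ctx
| clock : Ctx -> Ctx.

(* Variables: no variable may be accessed across a lock. *)
Inductive Var : Ctx -> Ty -> Type :=
| ze : forall G A, Var (cext G A) A
| su : forall G A B, Var G A -> Var (cext G B) A.

(* Ext D G : proofs of D R G, G extends D on the right by types and locks. *)
Inductive Ext (D : Ctx) : Ctx -> Type :=
| ext_nil : Ext D D
| ext_snoc : forall G A, Ext D G -> Ext D (cext G A)
| ext_lock : forall G, Ext D G -> Ext D (clock G).

Arguments ext_nil {D}.
Arguments ext_snoc {D G} A e.
Arguments ext_lock {D G} e.

Inductive Tm : Ctx -> Ty -> Type :=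
| var : forall G A, Var G A -> Tm G A
| lam : forall G A B, Tm (cext G A) B -> Tm G (arr A B)
| app : forall G A B, Tm G (arr A B) -> Tm G A -> Tm G B
| box : forall G A, Tm (clock G) A -> Tm G (bx A)
| unbox : forall D G A, Tm D (bx A) -> Ext D G -> Tm G A.

Fixpoint ext_trans D G H (e1 : Ext D G) (e2 : Ext G H) {struct e2} : Ext D H :=
  match e2 in Ext _ H return Ext D H with
  | ext_nil => e1
  | ext_snoc A e => ext_snoc A (ext_trans e1 e)
  | ext_lock e => ext_lock (ext_trans e1 e)
  end.

(* Generic substitutions Sub_T G D : assign to every entry of D something in G.
   A lock of D is mapped to a lock of some G0 with G0 R G. *)
Fixpoint SubK (T : Ctx -> Ty -> Type) (G D : Ctx) {struct D} : Type :=
  match D with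
  | cnil => unit
  | cext D A => (SubK T G D * T G A)%type
  | clock D => { G0 : Ctx & (SubK T G0 D * Ext G0 G)%type }
  end.

Definition Ren := SubK Var.
Definition Sub := SubK Tm.

Fixpoint factor (T : Ctx -> Ty -> Type) D G (e : Ext D G) {struct e}
  : forall G', SubK T G' G -> { D' : Ctx & (SubK T D' D * Ext D' G')%type } :=
  match e in Ext _ G return forall G', SubK T G' G ->
          { D' : Ctx & (SubK T D' D * Ext D' G')%type } with
  | ext_nil => fun G' s => existT _ G' (s, ext_nil)
  | ext_snoc _ e => fun G' s => factor e (fst s)
  | ext_lock e => fun G' s =>
      match s with
      | existT _ G0 (s0, e0) =>
          match factor e s0 with
          | existT _ D' (s', e') => existT _ D' (s', ext_trans e' e0)
          end
      end
  end.

Fixpoint wkK (T : Ctx -> Ty -> Type) (w : forall G A B, T G A -> T (cext G B) A)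
  G B D {struct D} : SubK T G D -> SubK T (cext G B) D :=
  match D return SubK T G D -> SubK T (cext G B) D with
  | cnil => fun _ => tt
  | cext D A => fun s => (wkK w B (fst s), w _ _ B (snd s))
  | clock D => fun s =>
      match s with existT _ G0 (s0, e0) => existT _ G0 (s0, ext_snoc B e0) end
  end.

Fixpoint lookupK (T : Ctx -> Ty -> Type) G D A (x : Var D A) {struct x}
  : SubK T G D -> T G A :=
  match x in Var D A return SubK T G D -> T G A with
  | ze _ _ => fun s => snd s
  | su _ x => fun s => lookupK x (fst s)
  end.

Fixpoint idRen (G : Ctx) : Ren G G :=
  match G return Ren G G with
  | cnil => tt
  | cext G A => (wkK (@su) A (idRen G), ze G A)
  | clock G => existT _ G (idRen G, ext_lock ext_nil)
  end.

Fixpoint ren D A (t : Tm D A) {struct t} : forall G, Ren G D -> Tm G A :=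
  match t in Tm D A return forall G, Ren G D -> Tm G A with
  | var x => fun G r => var (lookupK x r)
  | @lam _ A0 _ t => fun G r => lam (@ren _ _ t (cext G A0) (wkK (@su) A0 r, ze G A0))
  | app t u => fun G r => app (@ren _ _ t G r) (@ren _ _ u G r)
  | box t => fun G r =>
      box (@ren _ _ t (clock G) (existT _ G (r, ext_lock ext_nil)))
  | unbox t e => fun G r =>
      match factor e r with
      | existT _ D' (r', e') => unbox (@ren _ _ t D' r') e'
      end
  end.
Arguments ren {D A} t G r.

Definition wkTm G A B (t : Tm G A) : Tm (cext G B) A :=
  ren t (cext G B) (wkK (@su) B (idRen G)).

Fixpoint idSub (G : Ctx) : Sub G G :=
  match G return Sub G G with
  | cnil => tt
  | cext G A => (wkK (@wkTm) A (idSub G), var (ze G A))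
  | clock G => existT _ G (idSub G, ext_lock ext_nil)
  end.

Fixpoint sub D A (t : Tm D A) {struct t} : forall G, Sub G D -> Tm G A :=
  match t in Tm D A return forall G, Sub G D -> Tm G A with
  | var x => fun G s => lookupK x s
  | @lam _ A0 _ t => fun G s =>
      lam (@sub _ _ t (cext G A0) (wkK (@wkTm) A0 s, var (ze G A0)))
  | app t u => fun G s => app (@sub _ _ t G s) (@sub _ _ u G s)
  | box t => fun G s =>
      box (@sub _ _ t (clock G) (existT _ G (s, ext_lock ext_nil)))
  | unbox t e => fun G s =>
      match factor e s with
      | existT _ D' (s', e') => unbox (@sub _ _ t D' s') e'
      end
  end.
Arguments sub {D A} t G s.

Definition lockSub D G (e : Ext D G) : Sub G (clock D) :=
  existT (fun G0 => (Sub G0 D * Ext G0 G)%type) D (idSub D, e).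

Inductive conv : forall G A, Tm G A -> Tm G A -> Prop :=
| conv_refl : forall G A (t : Tm G A), conv t t
| conv_sym : forall G A (t u : Tm G A), conv t u -> conv u t
| conv_trans : forall G A (t u v : Tm G A), conv t u -> conv u v -> conv t v
| conv_lam : forall G A B (t t' : Tm (cext G A) B), conv t t' -> conv (lam t) (lam t')
| conv_app : forall G A B (t t' : Tm G (arr A B)) (u u' : Tm G A),
    conv t t' -> conv u u' -> conv (app t u) (app t' u')
| conv_box : forall G A (t t' : Tm (clock G) A), conv t t' -> conv (box t) (box t')
| conv_unbox : forall D G A (t t' : Tm D (bx A)) (e : Ext D G),
    conv t t' -> conv (unbox t e) (unbox t' e)
| conv_arr_beta : forall G A B (t : Tm (cext G A) B) (u : Tm G A),
    conv (app (lam t) u) (sub t G (idSub G, u))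
| conv_arr_eta : forall G A B (t : Tm G (arr A B)),
    conv t (lam (app (wkTm A t) (var (ze G A))))
| conv_box_beta : forall D G A (t : Tm (clock D) A) (e : Ext D G),
    conv (unbox (box t) e) (sub t G (lockSub e))
| conv_box_eta : forall G A (t : Tm G (bx A)),
    conv t (box (unbox t (ext_lock ext_nil))).

Section Interp.
Variable M : ModalCCC.
Variable base : ob M.

Let CC := mc_ccc M.
Let Bx := mc_box M.
Let Lk := mc_lock M.
Let W := mc_comonad M.
Let Adj := mc_adj M.

Fixpoint ity (A : Ty) : ob M :=
  match A with
  | iota => base
  | arr A B => exp CC (ity A) (ity B)
  | bx A => Bx (ity A)
  end.

Fixpoint ictx (G : Ctx) : ob M :=
  match G with
  | cnil => term CC
  | cext G A => prod CC (ictx G) (ity A)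
  | clock G => Lk (ictx G)
  end.

Fixpoint ivar G A (x : Var G A) : @hom M (ictx G) (ity A) :=
  match x in Var G A return @hom M (ictx G) (ity A) with
  | ze _ _ => p2 CC
  | su _ x => comp (ivar x) (p1 CC)
  end.

Definition transp_inv (X Y : ob M) (f : @hom M X (Bx Y)) : @hom M (Lk X) Y :=
  comp (adj_counit Adj Y) (fmap Lk f).

(* the monad structure on Lk induced by the comonad Bx and the adjunction *)
Definition etaL (X : ob M) : @hom M X (Lk X) :=
  comp (cm_counit W (Lk X)) (adj_unit Adj X).

Definition muL (X : ob M) : @hom M (Lk (Lk X)) (Lk X) :=
  transp_inv (transp_inv (comp (cm_comult W (Lk X)) (adj_unit Adj X))).

Fixpoint iext D G (e : Ext D G) : @hom M (ictx G) (Lk (ictx D)) :=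
  match e in Ext _ G return @hom M (ictx G) (Lk (ictx D)) with
  | ext_nil => etaL (ictx D)
  | ext_snoc _ e => comp (iext e) (p1 CC)
  | ext_lock e => comp (muL (ictx D)) (fmap Lk (iext e))
  end.

Fixpoint itm G A (t : Tm G A) : @hom M (ictx G) (ity A) :=
  match t in Tm G A return @hom M (ictx G) (ity A) with
  | var x => ivar x
  | lam t => cur CC (itm t)
  | app t u => comp (ev CC) (pair CC (itm t) (itm u))
  | @box G _ t => comp (fmap Bx (itm t)) (adj_unit Adj (ictx G))
  | @unbox _ _ A t e => comp (adj_counit Adj (ity A)) (comp (fmap Lk (itm t)) (iext e))
  end.

End Interp.

(* Main.v *)
From Stdlib Require Import Setoid.
Require Import Defs.

Lemma compK {C : Category} {a b c d : C} {g : hom b c} {f : hom a b} {h : hom a c} :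
  comp g f = h -> forall (k : hom d a), comp g (comp f k) = comp h k.
Proof. intros H k. rewrite comp_assoc, H. reflexivity. Qed.

Ltac rn := repeat rewrite <- comp_assoc; repeat rewrite comp_id_l; repeat rewrite comp_id_r.
Tactic Notation "rw" uconstr(H) := rn; first [rewrite (compK H) | rewrite H]; rn.
Tactic Notation "rwr" uconstr(H) := rn; first [rewrite (compK (eq_sym H)) | rewrite <- H]; rn.

Section Cat.
Variable M : ModalCCC.
Local Notation "g ∘ f" := (comp g f) (at level 40, left associativity).
Local Notation L := (mc_lock M).
Local Notation R := (mc_box M).
Local Notation u := (adj_unit (mc_adj M)).
Local Notation c := (adj_counit (mc_adj M)).
Local Notation ep := (cm_counit (mc_comonad M)).
Local Notation de := (cm_comult (mc_comonad M)).
Local Notation AD := (mc_adj M).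
Local Notation CW := (mc_comonad M).

Lemma ti_post X Y Z (g : hom Y Z) (h : hom X (R Y)) :
  g ∘ transp_inv h = transp_inv (fmap R g ∘ h).
Proof. unfold transp_inv. rw (adj_counit_nat AD _). rewrite fmap_comp. reflexivity. Qed.

Lemma ti_pre X X' Y (h : hom X (R Y)) (k : hom X' X) :
  transp_inv h ∘ fmap L k = transp_inv (h ∘ k).
Proof. unfold transp_inv. rewrite fmap_comp. rn. reflexivity. Qed.

Lemma ti_u X : transp_inv (u X) = idm (L X).
Proof. unfold transp_inv. apply adj_tri_L. Qed.

Lemma Rti X Y (h : hom X (R Y)) : fmap R (transp_inv h) ∘ u X = h.
Proof. unfold transp_inv. rewrite fmap_comp. rw (adj_unit_nat AD _). rw (adj_tri_R AD _). reflexivity. Qed.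

Lemma etaL_nat X Y (f : hom X Y) : fmap L f ∘ etaL X = etaL Y ∘ f.
Proof.
  unfold etaL. rw (cm_counit_nat CW _). rw (adj_unit_nat AD _). reflexivity.
Qed.

Lemma muL_nat X Y (f : hom X Y) : fmap L f ∘ muL X = muL Y ∘ fmap L (fmap L f).
Proof.
  unfold muL. rewrite ti_post, ti_pre. f_equal.
  rewrite ti_post, ti_pre. f_equal.
  rw (cm_comult_nat CW _). rw (adj_unit_nat AD _). reflexivity.
Qed.

Lemma muL_etaL X : muL X ∘ etaL (L X) = idm (L X).
Proof.
  unfold etaL. rw (cm_counit_nat CW _). unfold muL at 1. rw Rti.
  unfold transp_inv. rw (adj_counit_nat AD _). rewrite <- fmap_comp.
  rw (cm_law2 CW _). apply adj_tri_L.
Qed.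

Lemma muL_LetaL X : muL X ∘ fmap L (etaL X) = idm (L X).
Proof.
  unfold muL. rewrite ti_pre. rewrite <- ti_u. f_equal.
  unfold transp_inv at 1. unfold etaL. rewrite fmap_comp. rn.
  do 3 rw (cm_counit_nat CW _).
  do 2 rw (adj_unit_nat AD _). rw (adj_tri_R AD _). rw (cm_law1 CW _). reflexivity.
Qed.

Lemma muL_assoc X : muL X ∘ fmap L (muL X) = muL X ∘ muL (L X).
Proof.
  set (T := transp_inv (de (L X) ∘ u X)).
  assert (E1 : fmap R T ∘ T = de (L X) ∘ T).
  { unfold T at 2 3. rewrite !ti_post. f_equal.
    rw (cm_comult_nat CW _). unfold T. rw Rti. rw (cm_law3 CW _). reflexivity. }
  assert (E2 : T ∘ muL X = fmap R (transp_inv T) ∘ transp_inv (de (L (L X)) ∘ u (L X))).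
  { unfold muL. fold T. rewrite !ti_post. f_equal.
    rw (cm_comult_nat CW _). rw Rti. rn. exact E1. }
  unfold muL at 1 3. fold T. rewrite ti_pre. rewrite E2.
  unfold muL. fold T. rewrite (ti_post _ _ _ (transp_inv T)). reflexivity.
Qed.

End Cat.


Section Sem.
Set Implicit Arguments.
Variable M : ModalCCC.
Variable base : ob M.
Local Notation "g ∘ f" := (comp g f) (at level 40, left associativity).
Local Notation L := (mc_lock M).
Local Notation R := (mc_box M).
Local Notation u := (adj_unit (mc_adj M)).
Local Notation c := (adj_counit (mc_adj M)).
Local Notation CC := (mc_ccc M).
Local Notation AD := (mc_adj M).
Local Notation CW := (mc_comonad M).

Lemma pair_comp X Y Z W (f : hom Y Z) (g : hom Y W) (h : hom X Y) :
  pair CC f g ∘ h = pair CC (f ∘ h) (g ∘ h).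
Proof.
  rewrite <- (pair_unique (pair CC f g ∘ h)). rewrite !comp_assoc, pair_p1, pair_p2. reflexivity.
Qed.

Lemma pair_id X Y : pair CC (p1 CC) (p2 CC) = idm (prod CC X Y).
Proof. rewrite <- (pair_unique (idm _)). rewrite !comp_id_r. reflexivity. Qed.

Lemma cur_comp X Y Z W (f : hom (prod CC Y Z) W) (g : hom X Y) :
  cur CC f ∘ g = cur CC (f ∘ pair CC (g ∘ p1 CC) (p2 CC)).
Proof.
  apply cur_unique.
  rewrite <- (cur_beta f) at 2. rn. rewrite pair_comp. rn. rewrite pair_p1, pair_p2.
  reflexivity.
Qed.

Fixpoint isubK {T : Ctx -> Ty -> Type}
  (f : forall G A, T G A -> hom (ictx base G) (ity base A)) {G D} {struct D}
  : SubK T G D -> hom (ictx base G) (ictx base D) :=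
  match D return SubK T G D -> hom (ictx base G) (ictx base D) with
  | cnil => fun _ => bang CC _
  | cext D A => fun s => pair CC (isubK f (fst s)) (f _ _ (snd s))
  | clock D => fun s => match s with
      existT _ G0 (s0, e0) => fmap L (isubK f s0) ∘ iext base e0 end
  end.

Lemma lookup_sem (T : Ctx -> Ty -> Type) (f : forall G A, T G A -> hom (ictx base G) (ity base A)) G D A (x : Var D A) (s : SubK T G D) :
  ivar base x ∘ isubK f s = f _ _ (lookupK x s).
Proof.
  induction x; simpl.
  - apply pair_p2.
  - rn. rewrite pair_p1. apply IHx.
Qed.

Lemma wk_sem (T : Ctx -> Ty -> Type) (f : forall G A, T G A -> hom (ictx base G) (ity base A)) (w : forall G A B, T G A -> T (cext G B) A)
  (hw : forall G A B t, f _ _ (w G A B t) = f _ _ t ∘ p1 CC) G (B : Ty) D (s : SubK T G D) :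
  isubK f (wkK w B s) = isubK f s ∘ p1 CC.
Proof.
  induction D; simpl.
  - rewrite (bang_unique (bang CC _ ∘ p1 CC)). reflexivity.
  - rewrite pair_comp, IHD, hw. reflexivity.
  - destruct s as [G0 [s0 e0]]. simpl. rn. reflexivity.
Qed.

Lemma ext_trans_sem D G H (e1 : Ext D G) (e2 : Ext G H) :
  iext base (ext_trans e1 e2) = muL _ ∘ fmap L (iext base e1) ∘ iext base e2.
Proof.
  induction e2; simpl.
  - rn. rewrite etaL_nat. rw (muL_etaL _ _). reflexivity.
  - rewrite IHe2. rn. reflexivity.
  - rewrite IHe2. rewrite !fmap_comp. rn.

    rw (muL_assoc _ _). rw (muL_nat _ _ _ _). reflexivity.
Qed.
Lemma factor_sem (T : Ctx -> Ty -> Type) (f : forall G A, T G A -> hom (ictx base G) (ity base A))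
  D G (e : Ext D G) : forall G' (s : SubK T G' G),
  iext base e ∘ isubK f s =
  fmap L (isubK f (fst (projT2 (factor e s)))) ∘ iext base (snd (projT2 (factor e s))).
Proof.
  induction e; intros G' s; simpl.
  - rewrite etaL_nat. reflexivity.
  - destruct s as [s t]. simpl. rn. rewrite pair_p1. apply IHe.
  - destruct s as [G0 [s0 e0]]. simpl.
    pose proof (IHe G0 s0) as H. destruct (factor e s0) as [D' [s' e']]. simpl in *.
    rewrite ext_trans_sem. rn. rw (eq_sym (fmap_comp _ _ _)). rewrite H. rewrite fmap_comp. rw (muL_nat _ _ _ _). reflexivity.
Qed.
Local Notation IV := (@ivar M base).
Local Notation IT := (@itm M base).

Lemma idRen_sem G : isubK IV (idRen G) = idm _.
Proof.
  induction G; simpl.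
  - symmetry. apply bang_unique.
  - rewrite (wk_sem _ IV (@su) (fun _ _ _ _ => eq_refl)). rewrite IHG. rn. apply pair_id.
  - rewrite IHG, fmap_id. rn. apply muL_LetaL.
Qed.

Lemma ren_sem D A (t : Tm D A) : forall G (r : Ren G D),
  itm base (ren t G r) = itm base t ∘ isubK IV r.
Proof.
  induction t; intros G' r; simpl.
  - symmetry. apply lookup_sem.
  - rewrite IHt. simpl isubK. rewrite (wk_sem _ IV (@su) (fun _ _ _ _ => eq_refl)).
    rewrite cur_comp. reflexivity.
  - rewrite IHt1, IHt2. rn. rewrite pair_comp. reflexivity.
  - rewrite IHt. simpl isubK. rewrite muL_LetaL, comp_id_r, !fmap_comp. rn. cbn [ictx]. rw (adj_unit_nat AD _). reflexivity.
  - pose proof (factor_sem _ IV e _ r) as H. destruct (factor e r) as [D' [r' e']]. simpl in *.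
    rewrite IHt, fmap_comp. rn. rewrite H. reflexivity.
Qed.
Lemma wkTm_sem G A B (t : Tm G A) : itm base (wkTm B t) = itm base t ∘ p1 CC.
Proof.
  unfold wkTm. rewrite ren_sem. rewrite (wk_sem _ IV (@su) (fun _ _ _ _ => eq_refl)).
  rewrite idRen_sem. rn. reflexivity.
Qed.

Lemma idSub_sem G : isubK IT (idSub G) = idm _.
Proof.
  induction G; simpl.
  - symmetry. apply bang_unique.
  - rewrite (wk_sem _ IT (@wkTm) wkTm_sem). rewrite IHG. rn. apply pair_id.
  - rewrite IHG, fmap_id. rn. apply muL_LetaL.
Qed.

Lemma sub_sem D A (t : Tm D A) : forall G (s : Sub G D),
  itm base (sub t G s) = itm base t ∘ isubK IT s.
Proof.
  induction t; intros G' r; simpl.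
  - symmetry. apply lookup_sem.
  - rewrite IHt. simpl isubK. rewrite (wk_sem _ IT (@wkTm) wkTm_sem).
    rewrite cur_comp. reflexivity.
  - rewrite IHt1, IHt2. rn. rewrite pair_comp. reflexivity.
  - rewrite IHt. simpl isubK. rewrite muL_LetaL, comp_id_r, !fmap_comp. rn. cbn [ictx].
    rw (adj_unit_nat AD _). reflexivity.
  - pose proof (factor_sem _ IT e _ r) as H. destruct (factor e r) as [D' [r' e']]. simpl in *.
    rewrite IHt, fmap_comp. rn. rewrite H. reflexivity.
Qed.

End Sem.
Unset Implicit Arguments.

Theorem proposition2 (M : ModalCCC) (base : ob M) (G : Ctx) (A : Ty)
  (t u : Tm G A) :
  conv t u -> itm base t = itm base u.
Proof.
  intro H. induction H; simpl; try congruence.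
  - (* arr beta *)
    rewrite sub_sem. simpl isubK. rewrite idSub_sem.
    rewrite <- (cur_beta (itm base t)) at 2. rn. rewrite pair_comp. rn.
    rewrite pair_p1, pair_p2. rn. reflexivity.
  - (* arr eta *)
    rewrite wkTm_sem. apply cur_unique. reflexivity.
  - (* box beta *)
    rewrite sub_sem. simpl isubK. rewrite idSub_sem, fmap_id. rn.
    rewrite fmap_comp. rn. cbn [ictx]. rwr (adj_counit_nat (mc_adj M) _). rw (adj_tri_L (mc_adj M) _). reflexivity.
  - (* box eta *)
    rewrite muL_LetaL. rn. cbn [ictx]. rewrite fmap_comp. rn.
    rw (adj_unit_nat (mc_adj M) _). rw (adj_tri_R (mc_adj M) _). reflexivity.
Qed.
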